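(* In the setup below, for every $\omega\in\Omega$ with $p(\omega|x)>0$, $$I_\omega(|\Psi_x^{SE}\rangle):=4\,\langle\partial_x^\perp\Psi_x^{SE}|(\mathbb I\otimes|\pi_\omega^E\rangle\langle\pi_\omega^E|)|\partial_x^\perp\Psi_x^{SE}\rangle\ \ge\ p(\omega|x)\,I(\sigma_{x|\omega})+\frac{(\partial_xp(\omega|x))^2}{p(\omega|x)} .$$ Consequently, for any subset $\checkmark\subseteq\Omega$ of outcomes with $p(\omega|x)>0$ for $\omega\in\checkmark$, $I(|\Psi_x^{SE}\rangle)\ge\sum_{\omega\in\checkmark}p(\omega|x)I(\sigma_{x|\omega})$.
   Context: Setup: finite-dimensional $\mathcal H_S,\mathcal H_E$; unit vectors $|\psi_i\rangle\in\mathcal H_S$, $|\phi_i^E\rangle\in\mathcal H_E$; a $C^1$ family of unitaries $U_x^{SE}$ on $\mathcal H_S\otimes\mathcal H_E$; an orthonormal basis $\{|\pi_\omega^E\rangle\}_{\omega\in\Omega}$ of $\mathcal H_E$. $|\Psi_x^{SE}\rangle=U_x^{SE}(|\psi_i\rangle\otimes|\phi_i^E\rangle)$ and $|\partial_x^\perp\Psi_x^{SE}\rangle=|\partial_x\Psi_x^{SE}\rangle-|\Psi_x^{SE}\rangle\langle\Psi_x^{SE}|\partial_x\Psi_x^{SE}\rangle$. $M_{\omega,x}=\langle\pi_\omega^E|U_x^{SE}|\phi_i^E\rangle$, $|\tilde\psi_{x|\omega}\rangle=M_{\omega,x}|\psi_i\rangle$, $p(\omega|x)=\|\tilde\psi_{x|\omega}\|^2$,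 $\sigma_{x|\omega}=|\tilde\psi_{x|\omega}\rangle\langle\tilde\psi_{x|\omega}|/p(\omega|x)$. QFI of a normalized pure state: $I(|\phi_x\rangle)=4(\langle\partial_x\phi_x|\partial_x\phi_x\rangle-|\langle\phi_x|\partial_x\phi_x\rangle|^2)$. *)

(* Defs.v *)
From HB Require Import structures.
From mathcomp Require Import all_boot all_order all_algebra.
From mathcomp Require Import all_classical all_reals all_analysis.
From mathcomp Require Import complex.

Set Implicit Arguments.
Unset Strict Implicit.
Unset Printing Implicit Defensive.

Import Order.TTheory GRing.Theory Num.Theory.
Import numFieldNormedType.Exports.
Local Open Scope ring_scope.

(* Finite-dimensional Hilbert spaces are modelled as C^T = (T -> R[i]) for a
   finite index type T (a fixed orthonormal "computational" basis).
   The composite space H_S (x) H_E is C^(S * E). *)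

Definition abs2 (R : realType) (z : R[i]) : R := (complex.Re z) ^+ 2 + (complex.Im z) ^+ 2.

Definition dotv (R : realType) (T : finType) (u v : T -> R[i]) : R[i] :=
  \sum_(t : T) conjc (u t) * v t.

Definition normsq (R : realType) (T : finType) (v : T -> R[i]) : R :=
  \sum_(t : T) abs2 (v t).

Definition dC (R : realType) (f : R -> R[i]) (x : R) : R[i] :=
  Complex (derive1 (fun t => complex.Re (f t)) x) (derive1 (fun t => complex.Im (f t)) x).

Definition C1fun (R : realType) (f : R -> R[i]) : Prop :=
  (forall t, derivable (fun y => complex.Re (f y)) t 1) /\
  continuous (fun t : R => (derive1 (fun y => complex.Re (f y)) t : R)) /\
  (forall t, derivable (fun y => complex.Im (f y)) t 1) /\
  continuous (fun t : R => (derive1 (fun y => complex.Im (f y)) t : R)).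

Definition dvec (R : realType) (T : finType) (phi : R -> T -> R[i]) (x : R)
  : T -> R[i] := fun t => dC (fun y => phi y t) x.

(* QFI of a (normalized) pure state family:
   I(|phi_x>) = 4 (<d phi|d phi> - |<phi|d phi>|^2) *)
Definition QFI (R : realType) (T : finType) (phi : R -> T -> R[i]) (x : R) : R :=
  4 * (complex.Re (dotv (dvec phi x) (dvec phi x)) - abs2 (dotv (phi x) (dvec phi x))).

Definition unitary_family (R : realType) (T : finType) (U : R -> T -> T -> R[i])
  : Prop :=
  forall x i j, \sum_(k : T) U x i k * conjc (U x j k) = (i == j)%:R.

Definition C1_family (R : realType) (T : finType) (U : R -> T -> T -> R[i])
  : Prop := forall i j, C1fun (fun x => U x i j).

Definition orthonormal_basis (R : realType) (E Om : finType) (pi : Om -> E -> R[i])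
  : Prop :=
  (forall w w', dotv (pi w) (pi w') = (w == w')%:R) /\ #|Om| = #|E|.

Section Setup.
Variables (R : realType) (S E Om : finType).
Variables (psi : S -> R[i]) (phi : E -> R[i]) (U : R -> (S * E)%type -> (S * E)%type -> R[i]).
Variable (pi : Om -> E -> R[i]).

Definition Psi (x : R) : (S * E)%type -> R[i] :=
  fun k => \sum_(l : (S * E)%type) U x k l * (psi l.1 * phi l.2).

Definition dperpPsi (x : R) : (S * E)%type -> R[i] :=
  fun k => dvec Psi x k - Psi x k * dotv (Psi x) (dvec Psi x).

(* (I (x) |pi_w><pi_w|) applied to v *)
Definition projE (w : Om) (v : (S * E)%type -> R[i]) : (S * E)%type -> R[i] :=
  fun k => pi w k.2 * \sum_(e : E) conjc (pi w e) * v (k.1, e).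

Definition Iomega (w : Om) (x : R) : R :=
  4 * complex.Re (dotv (dperpPsi x) (projE w (dperpPsi x))).

Definition Mop (w : Om) (x : R) (s s' : S) : R[i] :=
  \sum_(e : E) \sum_(e' : E) conjc (pi w e) * U x (s, e) (s', e') * phi e'.

Definition psit (w : Om) (x : R) : S -> R[i] :=
  fun s => \sum_(s' : S) Mop w x s s' * psi s'.

Definition prob (w : Om) (x : R) : R := normsq (psit w x).

(* normalized state vector of the pure state sigma_{x|w} =
   |psi~><psi~| / p(w|x) *)
Definition sigvec (w : Om) (x : R) : S -> R[i] :=
  fun s => psit w x s / Complex (Num.sqrt (prob w x)) 0.

End Setup.

(* Main.v *)
Require Import Defs.
From HB Require Import structures.
From mathcomp Require Import all_boot all_order all_algebra.
From mathcomp Require Import all_classical all_reals all_analysis.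
From mathcomp Require Import complex.
From mathcomp Require Import ring lra.
Import Order.TTheory GRing.Theory Num.Theory.
Import numFieldNormedType.Exports.
Local Open Scope ring_scope.
Local Open Scope complex_scope.
Set Implicit Arguments.
Unset Strict Implicit.

Section CL.
Variable R : realType.
Local Notation C := R[i].
Implicit Types z w : C.

Lemma ReD z w : complex.Re (z + w) = complex.Re z + complex.Re w.
Proof. by case: z w => a b [c d]. Qed.
Lemma ImD z w : complex.Im (z + w) = complex.Im z + complex.Im w.
Proof. by case: z w => a b [c d]. Qed.
Lemma ReN z : complex.Re (- z) = - complex.Re z.
Proof. by case: z. Qed.
Lemma ImN z : complex.Im (- z) = - complex.Im z.
Proof. by case: z. Qed.
Lemma ReM z w : complex.Re (z * w) = complex.Re z * complex.Re w - complex.Im z * complex.Im w.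
Proof. by case: z w => a b [c d]. Qed.
Lemma ImM z w : complex.Im (z * w) = complex.Re z * complex.Im w + complex.Im z * complex.Re w.
Proof. by case: z w => a b [c d]. Qed.
Lemma ReJ z : complex.Re (conjc z) = complex.Re z.
Proof. by case: z. Qed.
Lemma ImJ z : complex.Im (conjc z) = - complex.Im z.
Proof. by case: z. Qed.
Lemma ReC (r : R) : complex.Re (r%:C) = r. Proof. by []. Qed.
Lemma ImC (r : R) : complex.Im (r%:C) = 0. Proof. by []. Qed.
Lemma Re0 : complex.Re (0 : C) = 0. Proof. by []. Qed.
Lemma Im0 : complex.Im (0 : C) = 0. Proof. by []. Qed.
Lemma Re1 : complex.Re (1 : C) = 1. Proof. by []. Qed.
Lemma Im1 : complex.Im (1 : C) = 0. Proof. by []. Qed.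

Lemma Re_sum (T : finType) (F : T -> C) : complex.Re (\sum_t F t) = \sum_t complex.Re (F t).
Proof. exact: (big_morph _ ReD Re0). Qed.
Lemma Im_sum (T : finType) (F : T -> C) : complex.Im (\sum_t F t) = \sum_t complex.Im (F t).
Proof. exact: (big_morph _ ImD Im0). Qed.
Lemma conj_sum (T : finType) (F : T -> C) : conjc (\sum_t F t) = \sum_t conjc (F t).
Proof. by rewrite rmorph_sum. Qed.
Lemma conjM z w : conjc (z * w) = conjc z * conjc w. Proof. by rewrite rmorphM. Qed.
Lemma conjD z w : conjc (z + w) = conjc z + conjc w. Proof. by rewrite rmorphD. Qed.
Lemma conjK z : conjc (conjc z) = z. Proof. by case: z => a b; rewrite /conjc opprK. Qed.
Lemma conjC (r : R) : conjc r%:C = r%:C. Proof. by rewrite /conjc /= oppr0. Qed.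

Lemma abs2E z : (abs2 z)%:C = conjc z * z.
Proof. case: z => a b; rewrite /abs2 /=; apply/eqP; rewrite eq_complex /=; apply/andP; split; apply/eqP; ring. Qed.
Lemma abs2_ge0 z : 0 <= abs2 z.
Proof. by rewrite /abs2 addr_ge0 // sqr_ge0. Qed.
Lemma abs2M z w : abs2 (z * w) = abs2 z * abs2 w.
Proof. rewrite /abs2 ReM ImM; ring. Qed.

Lemma complex_eq z w : complex.Re z = complex.Re w -> complex.Im z = complex.Im w -> z = w.
Proof. by case: z w => a b [c d] /= -> ->. Qed.

Lemma invC (r : R) : r != 0 -> (r%:C)^-1 = (r^-1)%:C :> C.
Proof.
move=> r0.
apply: (@mulfI _ r%:C); first by rewrite (inj_eq (@complexI R)).
by rewrite mulfV ?(inj_eq (@complexI R)) // -rmorphM mulfV.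
Qed.

Definition cder (f : R -> C) (x : R) (d : C) :=
  is_derive x (1:R) (fun y => complex.Re (f y)) (complex.Re d) /\
  is_derive x (1:R) (fun y => complex.Im (f y)) (complex.Im d).

Lemma cder_dC (f : R -> C) (x : R) d : cder f x d -> dC f x = d.
Proof.
case=> h1 h2; rewrite /dC !derive1E.
rewrite (@derive_val _ _ _ _ _ _ _ h1) (@derive_val _ _ _ _ _ _ _ h2).
by case: d {h1 h2}.
Qed.

Lemma cder_of (f : R -> C) (x : R) : derivable (fun y => complex.Re (f y)) x 1 ->
  derivable (fun y => complex.Im (f y)) x 1 -> cder f x (dC f x).
Proof.
move=> h1 h2; split; rewrite /dC /= derive1E; exact: derivableP.
Qed.

Lemma isd_fsum (T : finType) (F : T -> R -> R) (dF : T -> R) (x : R) :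
  (forall t, is_derive x 1 (F t) (dF t)) ->
  is_derive x 1 (fun y => \sum_t F t y) (\sum_t dF t).
Proof.
move=> H; rewrite -fct_sumE.
elim/big_rec2: _ => [|t f' d _ IH]; first exact: is_derive_cst.
exact: is_deriveD.
Qed.

Lemma isd_lin (a b : R) (f g : R -> R) (df dg x : R) : is_derive x 1 f df -> is_derive x 1 g dg ->
  is_derive x 1 (fun y => a * f y + b * g y) (a * df + b * dg).
Proof. move=> Hf Hg; exact: (is_deriveD (is_deriveZ a Hf) (is_deriveZ b Hg)). Qed.
Arguments isd_lin a b {f g df dg x}.

Lemma isd_mul (f g : R -> R) (df dg x : R) : is_derive x 1 f df -> is_derive x 1 g dg ->
  is_derive x 1 (fun y => f y * g y) (f x * dg + g x * df).
Proof. move=> Hf Hg; exact: (is_deriveM Hf Hg). Qed.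
Arguments isd_mul {f g df dg x}.

Lemma cder_sum (T : finType) (F : T -> R -> C) (dF : T -> C) (x : R) :
  (forall t, cder (F t) x (dF t)) -> cder (fun y => \sum_t F t y) x (\sum_t dF t).
Proof.
move=> H; split.
- have -> : (fun y => complex.Re (\sum_t F t y)) = (fun y => \sum_t complex.Re (F t y)).
    by apply/funext => y; rewrite Re_sum.
  rewrite Re_sum; apply: isd_fsum => t; exact: (H t).1.
- have -> : (fun y => complex.Im (\sum_t F t y)) = (fun y => \sum_t complex.Im (F t y)).
    by apply/funext => y; rewrite Im_sum.
  rewrite Im_sum; apply: isd_fsum => t; exact: (H t).2.
Qed.

Lemma cder_mulr (f : R -> C) d c (x : R) : cder f x d -> cder (fun y => f y * c) x (d * c).
Proof.
case=> h1 h2; split.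
- have -> : (fun y => complex.Re (f y * c)) =
     (fun y => complex.Re c * complex.Re (f y) + (- complex.Im c) * complex.Im (f y)).
    by apply/funext => y; rewrite ReM; ring.
  rewrite ReM; apply: (is_derive_eq (isd_lin (complex.Re c) (- complex.Im c) h1 h2)); ring.
- have -> : (fun y => complex.Im (f y * c)) =
     (fun y => complex.Im c * complex.Re (f y) + complex.Re c * complex.Im (f y)).
    by apply/funext => y; rewrite ImM; ring.
  rewrite ImM; apply: (is_derive_eq (isd_lin (complex.Im c) (complex.Re c) h1 h2)); ring.
Qed.

Lemma cder_mull (f : R -> C) d c (x : R) : cder f x d -> cder (fun y => c * f y) x (c * d).
Proof.
move=> h; have := @cder_mulr _ _ c _ h.
by rewrite mulrC; congr cder; apply/funext => y; rewrite mulrC.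
Qed.

Lemma cder_mulR (f : R -> C) d (q : R -> R) (dq x : R) : cder f x d -> is_derive x 1 q dq ->
  cder (fun y => f y * (q y)%:C) x (d * (q x)%:C + f x * dq%:C).
Proof.
case=> h1 h2 hq; split.
- have -> : (fun y => complex.Re (f y * (q y)%:C)) = (fun y => complex.Re (f y) * q y).
    by apply/funext => y; rewrite ReM /= mulr0 subr0.
  rewrite ReD !ReM /=; apply: (is_derive_eq (isd_mul h1 hq)); ring.
- have -> : (fun y => complex.Im (f y * (q y)%:C)) = (fun y => complex.Im (f y) * q y).
    by apply/funext => y; rewrite ImM /= mulr0 add0r.
  rewrite ImD !ImM /=; apply: (is_derive_eq (isd_mul h2 hq)); ring.
Qed.

Lemma isd_abs2 (f : R -> C) d (x : R) : cder f x d ->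
  is_derive x 1 (fun y => abs2 (f y)) (2 * complex.Re (conjc (f x) * d)).
Proof.
case=> h1 h2.
have -> : (fun y => abs2 (f y)) = (fun y => complex.Re (f y) * complex.Re (f y) +
    complex.Im (f y) * complex.Im (f y)).
  by apply/funext => y; rewrite /abs2 !expr2.
have := is_deriveD (isd_mul h1 h1) (isd_mul h2 h2).
move/is_derive_eq; apply; rewrite ReM ReJ ImJ /=; ring.
Qed.

Lemma isd_normsq (T : finType) (v : R -> T -> C) (dv : T -> C) (x : R) :
  (forall t, cder (fun y => v y t) x (dv t)) ->
  is_derive x 1 (fun y => normsq (v y)) (2 * complex.Re (dotv (v x) dv)).
Proof.
move=> H; rewrite /normsq /dotv Re_sum mulr_sumr.
apply: isd_fsum => t; exact: isd_abs2.
Qed.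

Lemma dotv_lin (T : finType) (a b c e : C) (u v u' v' : T -> C) :
  dotv (fun t => a * u t + b * v t) (fun t => c * u' t + e * v' t) =
  conjc a * c * dotv u u' + conjc a * e * dotv u v' +
  conjc b * c * dotv v u' + conjc b * e * dotv v v'.
Proof.
rewrite /dotv !mulr_sumr -!big_split /=; apply: eq_bigr => t _.
rewrite conjD !conjM; ring.
Qed.

Lemma dotv_self (T : finType) (v : T -> C) : dotv v v = (normsq v)%:C.
Proof. by rewrite /dotv /normsq raddf_sum; apply: eq_bigr => t _; exact/esym/abs2E. Qed.

Lemma dotv_conj (T : finType) (u v : T -> C) : conjc (dotv u v) = dotv v u.
Proof. by rewrite /dotv conj_sum; apply: eq_bigr => t _; rewrite conjM conjK mulrC. Qed.

Lemma normsq_ge0 (T : finType) (v : T -> C) : 0 <= normsq v.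
Proof. by apply: sumr_ge0 => t _; exact: abs2_ge0. Qed.

Lemma sum_reidx (T : finType) n (E : n = #|T|) (F : T -> C) :
  \sum_(k : T) F k = \sum_(m < n) F (enum_val (cast_ord E m)).
Proof.
rewrite (reindex (fun m : 'I_n => enum_val (cast_ord E m))) //=.
exists (fun k => cast_ord (esym E) (enum_rank k)) => m _.
  by rewrite enum_valK cast_ordK.
by rewrite cast_ordKV enum_rankK.
Qed.

Lemma unitary_swap (T1 T2 : finType) (f : T1 -> T2 -> C) : #|T1| = #|T2| ->
  (forall i j, \sum_k f i k * conjc (f j k) = (i == j)%:R) ->
  forall k l, \sum_i conjc (f i k) * f i l = (k == l)%:R.
Proof.
move=> E H k l.
pose n := #|T1|.
pose g1 (i : 'I_n) : T1 := enum_val (cast_ord (erefl n) i).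
pose g2 (j : 'I_n) : T2 := enum_val (cast_ord E j).
pose A : 'M[C]_n := \matrix_(i, j) f (g1 i) (g2 j).
pose B : 'M[C]_n := \matrix_(i, j) conjc (f (g1 j) (g2 i)).
have AB : A *m B = 1%:M.
  apply/matrixP => i j; rewrite !mxE.
  transitivity (\sum_k f (g1 i) k * conjc (f (g1 j) k)).
    by rewrite (@sum_reidx _ _ E); apply: eq_bigr => m _; rewrite !mxE.
  by rewrite H /g1 !cast_ord_id (inj_eq enum_val_inj).
have BA := mulmx1C AB.
have := congr1 (fun M : 'M[C]_n => M (cast_ord (esym E) (enum_rank k)) (cast_ord (esym E) (enum_rank l))) BA.
rewrite !mxE (inj_eq (@cast_ord_inj _ _ _)) (inj_eq enum_rank_inj) => <-.
rewrite (@sum_reidx T1 n (erefl n)); apply: eq_bigr => m _; rewrite !mxE /g2.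
by rewrite !cast_ordKV !enum_rankK.
Qed.

Lemma realCB (a b : R) : (a - b)%:C = a%:C - b%:C :> C.
Proof. by apply: complex_eq; rewrite ?ReD ?ReN ?ImD ?ImN /= ?subrr ?oppr0 ?addr0. Qed.
Lemma conj1 : conjc (1 : C) = 1. Proof. exact: rmorph1. Qed.

Lemma C00 : Complex (0:R) 0 = 0 :> C. Proof. by []. Qed.
Lemma invC' (r : R) : (Complex r 0)^-1 = Complex r^-1 0 :> C.
Proof.
have [->|r0] := eqVneq r 0; first by rewrite C00 invr0 invr0.
by have := @invC r r0.
Qed.

Lemma sum_pair (T1 T2 : finType) (G : T1 * T2 -> C) :
  \sum_l G l = \sum_a \sum_b G (a, b).
Proof. by rewrite pair_big; apply: eq_bigr => -[a b]. Qed.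

Lemma sum_delta (T : finType) (F : T -> C) i : \sum_j F j * (i == j)%:R = F i.
Proof.
rewrite (bigD1 i) //= eqxx mulr1 big1 ?addr0 // => j ji.
by rewrite eq_sym (negbTE ji) mulr0.
Qed.
End CL.

Lemma key_ineq (R : realType) (p N gr gi t a b : R) : 0 < p -> a ^+ 2 * p = 1 ->
  p * (4 * ((a * a * N + 2 * a * b * gr + b * b * p) -
            ((a * a * gr + a * b * p) ^+ 2 + (a * a * gi) ^+ 2)))
  + (2 * gr) ^+ 2 / p <= 4 * (N - 2 * t * gi + t * t * p).
Proof.
move=> hp h.
have pne0 : p != 0 by rewrite gt_eqF.
have ip : p^-1 = a ^+ 2.
  by apply: (mulfI pne0); rewrite mulfV // mulrC h.
rewrite ip -subr_ge0.
set K1 := 4 * N - 8 * p * a * b * gr - 4 * p ^+ 2 * b ^+ 2 - 4 * a ^+ 2 * gr ^+ 2 - 4 * a ^+ 2 * gi ^+ 2.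
have -> : 4 * (N - 2 * t * gi + t * t * p) -
  (p * (4 * ((a * a * N + 2 * a * b * gr + b * b * p) -
            ((a * a * gr + a * b * p) ^+ 2 + (a * a * gi) ^+ 2))) + (2 * gr) ^+ 2 * a ^+ 2)
  = 4 * a ^+ 2 * (t * p - gi) ^+ 2 + (a ^+ 2 * p - 1) * (- (4 * t ^+ 2 * p - 8 * t * gi) - K1).
  by rewrite /K1; ring.
rewrite h subrr mul0r addr0.
by rewrite mulr_ge0 // ?sqr_ge0 // mulr_ge0 // sqr_ge0.
Qed.

Section Main.
Variables (R : realType) (S E Om : finType).
Variables (psi : S -> R[i]) (phi : E -> R[i]) (U : R -> (S * E)%type -> (S * E)%type -> R[i]).
Variable (pi : Om -> E -> R[i]).
Hypotheses (Hpsi : normsq psi = 1) (Hphi : normsq phi = 1) (HC1 : C1_family U)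
  (HU : unitary_family U) (Hpi : orthonormal_basis pi).
Local Notation C := R[i].
Local Notation Ps := (Psi psi phi U).
Local Notation pt := (psit psi phi U pi).
Local Notation pr := (prob psi phi U pi).

Definition Pw (w : Om) (v : S * E -> C) : S -> C :=
  fun s => \sum_e conjc (pi w e) * v (s, e).

Lemma psit_P w y : pt w y = Pw w (Ps y).
Proof.
apply/funext => s; rewrite /psit /Mop /Pw /Psi.
transitivity (\sum_(s' : S) \sum_(e : E) \sum_(e' : E)
   conjc (pi w e) * U y (s, e) (s', e') * phi e' * psi s').
  apply: eq_bigr => s' _; rewrite big_distrl; apply: eq_bigr => e _.
  by rewrite big_distrl.
rewrite exchange_big; apply: eq_bigr => e _.
rewrite sum_pair big_distrr; apply: eq_bigr => s' _; rewrite big_distrr.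
apply: eq_bigr => e' _ /=; ring.
Qed.

Lemma Ucols y k l : \sum_i conjc (U y i k) * U y i l = (k == l)%:R.
Proof. exact: (@unitary_swap R _ _ (U y) (erefl _) (HU y) k l). Qed.

Lemma pi_compl e e' : \sum_w pi w e * conjc (pi w e') = (e == e')%:R.
Proof.
case: Hpi => Ho Hc.
have := @unitary_swap R Om E (fun w e => conjc (pi w e)) Hc.
move=> H; rewrite -(H _ e e'); last first.
  by move=> i j; rewrite -(Ho i j) /dotv; apply: eq_bigr => k _; rewrite conjK.
by apply: eq_bigr => w _; rewrite conjK.
Qed.

Lemma normsq_Psi y : normsq (Ps y) = 1.
Proof.
apply: (@complexI R); rewrite -dotv_self /dotv /Psi.
pose c (l : S * E) := psi l.1 * phi l.2.
transitivity (\sum_l \sum_l' conjc (c l) * c l' * \sum_k conjc (U y k l) * U y k l').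
  transitivity (\sum_k \sum_l \sum_l' conjc (U y k l * c l) * (U y k l' * c l')).
    apply: eq_bigr => k _; rewrite conj_sum big_distrl; apply: eq_bigr => l _.
    by rewrite big_distrr.
  rewrite exchange_big; apply: eq_bigr => l _; rewrite exchange_big.
  apply: eq_bigr => l' _; rewrite big_distrr; apply: eq_bigr => k _.
  rewrite conjM /=; ring.
under eq_bigr do under eq_bigr do rewrite Ucols.
under eq_bigr do rewrite sum_delta.
rewrite sum_pair.
transitivity (\sum_a \sum_b (abs2 (psi a))%:C * (abs2 (phi b))%:C).
  apply: eq_bigr => a _; apply: eq_bigr => b _; rewrite !abs2E /c /= conjM; ring.
transitivity ((normsq psi * normsq phi)%:C); last by rewrite Hpsi Hphi mulr1.
rewrite (rmorphM (real_complex R)) /normsq !raddf_sum big_distrl /=.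
by apply: eq_bigr => a _; rewrite big_distrr.
Qed.

Lemma dot_proj w v : dotv v (projE pi w v) = dotv (Pw w v) (Pw w v).
Proof.
rewrite /dotv /projE /Pw sum_pair; apply: eq_bigr => s _ /=.
rewrite conj_sum big_distrl; apply: eq_bigr => e _ /=.
rewrite conjM conjK; ring.
Qed.

Lemma sum_normsq_P v : \sum_w normsq (Pw w v) = normsq v.
Proof.
apply: (@complexI R); rewrite raddf_sum -dotv_self.
transitivity (\sum_w dotv (Pw w v) (Pw w v)).
  by apply: eq_bigr => w _; rewrite dotv_self.
rewrite /dotv /Pw sum_pair.
transitivity (\sum_s \sum_e \sum_e' conjc (v (s, e)) * v (s, e') *
    \sum_w pi w e * conjc (pi w e')).
  transitivity (\sum_w \sum_s \sum_e \sum_e' conjc (conjc (pi w e) * v (s, e)) * (conjc (pi w e') * v (s, e'))).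
    apply: eq_bigr => w _; apply: eq_bigr => s _; rewrite conj_sum big_distrl.
    by apply: eq_bigr => e _; rewrite big_distrr.
  rewrite exchange_big; apply: eq_bigr => s _; rewrite exchange_big.
  apply: eq_bigr => e _; rewrite exchange_big; apply: eq_bigr => e' _.
  rewrite big_distrr; apply: eq_bigr => w _ /=; rewrite conjM conjK; ring.
apply: eq_bigr => s _; apply: eq_bigr => e _.
under eq_bigr do rewrite pi_compl.
by rewrite sum_delta.
Qed.


Lemma cderU (x : R) i j : cder (fun y => U y i j) x (dC (fun y => U y i j) x).
Proof. by case: (HC1 i j) => h1 [_ [h2 _]]; exact: cder_of. Qed.

Lemma cderPsi (x : R) k : cder (fun y => Ps y k) x (dvec Ps x k).
Proof.
have H : cder (fun y => Ps y k) x
    (\sum_l dC (fun y => U y k l) x * (psi l.1 * phi l.2)).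
  rewrite /Psi; apply: cder_sum => l; apply: cder_mulr; exact: cderU.
by rewrite /dvec (cder_dC H).
Qed.

Lemma cderpt (x : R) w s : cder (fun y => pt w y s) x (Pw w (dvec Ps x) s).
Proof.
have -> : (fun y => pt w y s) = (fun y => \sum_e conjc (pi w e) * Ps y (s, e)).
  by apply/funext => y; rewrite psit_P.
apply: cder_sum => e; apply: cder_mull; exact: cderPsi.
Qed.

Lemma dvec_pt (x : R) w : dvec (pt w) x = Pw w (dvec Ps x).
Proof. by apply/funext => s; rewrite /dvec (cder_dC (cderpt x w s)). Qed.

Lemma dprob (x : R) w :
  is_derive x 1 (pr w) (2 * complex.Re (dotv (pt w x) (Pw w (dvec Ps x)))).
Proof. exact: (isd_normsq (fun s => cderpt x w s)). Qed.

Lemma Rec (x : R) : complex.Re (dotv (Ps x) (dvec Ps x)) = 0.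
Proof.
have H := isd_normsq (fun k => cderPsi x k).
have e : (fun y => normsq (Ps y)) = cst 1 by apply/funext => y; rewrite normsq_Psi.
rewrite e in H; have := @derive_val _ _ _ _ _ _ _ H.
rewrite derive_cst => /esym/eqP; rewrite mulf_eq0 pnatr_eq0 /= => /eqP //.
Qed.

Lemma Pw_dperp (x : R) w : Pw w (dperpPsi psi phi U x) =
  (fun s => 1 * Pw w (dvec Ps x) s + (- dotv (Ps x) (dvec Ps x)) * pt w x s).
Proof.
apply/funext => s; rewrite psit_P /Pw /dperpPsi mulNr mul1r big_distrr /= -sumrN -big_split /=.
by apply: eq_bigr => e _; ring.
Qed.

Lemma Iomega_eq (x : R) w : Iomega psi phi U pi w x =
  4 * normsq (Pw w (dperpPsi psi phi U x)).
Proof. by rewrite /Iomega dot_proj dotv_self. Qed.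

Lemma Iomega_ge0 (x : R) w : 0 <= Iomega psi phi U pi w x.
Proof. by rewrite Iomega_eq mulr_ge0 // normsq_ge0. Qed.

Lemma QFI_Psi (x : R) : QFI Ps x = \sum_w Iomega psi phi U pi w x.
Proof.
under eq_bigr do rewrite Iomega_eq.
rewrite -mulr_sumr sum_normsq_P /QFI; congr (4 * _).
set c := dotv (Ps x) (dvec Ps x).
have -> : dperpPsi psi phi U x = (fun k => 1 * dvec Ps x k + (- c) * Ps x k).
  by apply/funext => k; rewrite /dperpPsi /= mul1r mulNr mulrC.
apply: (@complexI R); rewrite -dotv_self dotv_lin.
have e1 : dotv (Ps x) (Ps x) = 1 by rewrite dotv_self normsq_Psi.
have e2 : dotv (dvec Ps x) (Ps x) = conjc c by rewrite /c dotv_conj.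
rewrite e1 e2 -/c [dotv (dvec Ps x) (dvec Ps x)]dotv_self ReC conj1 realCB abs2E rmorphN; ring.
Qed.


Lemma sig_eq w : sigvec psi phi U pi w =
  (fun y s => pt w y s * ((Num.sqrt (pr w y))^-1)%:C).
Proof. by apply/funext => y; apply/funext => s; rewrite /sigvec invC'. Qed.

Lemma dq_ex (x : R) w : 0 < pr w x ->
  exists dq, is_derive x 1 (fun y => (Num.sqrt (pr w y))^-1) dq.
Proof.
move=> hp.
have h1 := is_derive1_comp (is_derive1_sqrt hp) (dprob x w).
have hne : (Num.sqrt \o pr w) x != 0 by rewrite /= sqrtr_eq0 -ltNge.
by eexists; exact: (is_deriveV hne h1).
Qed.

Lemma le_congr (x y x' y' : R) : x = x' -> y = y' -> x' <= y' -> x <= y.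
Proof. by move=> -> ->. Qed.

Lemma normsq_Re (T : finType) (v : T -> C) : normsq v = complex.Re (dotv v v).
Proof. by rewrite dotv_self. Qed.

Lemma part1 (x : R) w : 0 < pr w x ->
  pr w x * QFI (sigvec psi phi U pi w) x + (derive1 (pr w) x) ^+ 2 / pr w x
  <= Iomega psi phi U pi w x.
Proof.
move=> hp.
have [b hq] := dq_ex hp.
have hdsig : dvec (sigvec psi phi U pi w) x =
   (fun s => ((Num.sqrt (pr w x))^-1)%:C * Pw w (dvec Ps x) s + b%:C * pt w x s).
  apply/funext => s; rewrite /dvec sig_eq /=.
  rewrite (cder_dC (cder_mulR (cderpt x w s) hq)) /=.
  by rewrite mulrC [_ * b%:C]mulrC.
have hsig : sigvec psi phi U pi w x =
   (fun s => ((Num.sqrt (pr w x))^-1)%:C * pt w x s + 0 * Pw w (dvec Ps x) s).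
  by rewrite sig_eq; apply/funext => s /=; rewrite mul0r addr0 mulrC.
have eP : derive1 (pr w) x = 2 * complex.Re (dotv (pt w x) (Pw w (dvec Ps x))).
  by rewrite derive1E (@derive_val _ _ _ _ _ _ _ (dprob x w)).
have eI := Iomega_eq x w.
rewrite Pw_dperp normsq_Re dotv_lin in eI.
rewrite eI eP /QFI hdsig hsig !dotv_lin.
have ec : dotv (Ps x) (dvec Ps x) = Complex 0 (complex.Im (dotv (Ps x) (dvec Ps x))).
  by move: (Rec x); case: (dotv _ _) => /= r i ->.
rewrite ec -[dotv (Pw w (dvec Ps x)) (pt w x)]dotv_conj.
rewrite [dotv (pt w x) (pt w x)]dotv_self [dotv (Pw w (dvec Ps x)) (Pw w (dvec Ps x))]dotv_self.
set a := (Num.sqrt (pr w x))^-1.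
have ha : a ^+ 2 * pr w x = 1.
  by rewrite /a exprVn sqr_sqrtr ?ltW // mulVf // gt_eqF.
move: ha.
set G := dotv (pt w x) (Pw w (dvec Ps x)).
set N := normsq (Pw w (dvec Ps x)).
set t := complex.Im (dotv (Ps x) (dvec Ps x)).
have eG : G = Complex (complex.Re G) (complex.Im G) by case: (G).
rewrite eG.
set gr := complex.Re G.
set gi := complex.Im G.
set p := normsq (pt w x).
rewrite /abs2 !conjC ?conj1 !(ReD, ImD, ReM, ImM, ReJ, ImJ, ReN, ImN) /=.
move=> ha.
have K := @key_ineq R p N gr gi t a b hp ha.
rewrite -[pr w x]/p.
apply: (le_congr _ _ K); ring.
Qed.


Lemma part2 (x : R) (A : {set Om}) : (forall w, w \in A -> 0 < pr w x) ->
  \sum_(w in A) pr w x * QFI (sigvec psi phi U pi w) x <= QFI Ps x.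
Proof.
move=> HA; rewrite QFI_Psi.
apply: (@le_trans _ _ (\sum_(w in A) Iomega psi phi U pi w x)).
  apply: ler_sum => w wA; apply: le_trans (part1 (HA w wA)).
  by rewrite lerDl divr_ge0 // ?sqr_ge0 // ltW // HA.
rewrite [X in _ <= X](bigID (fun w => w \in A)) /= lerDl.
by apply: sumr_ge0 => w _; exact: Iomega_ge0.
Qed.

End Main.

Theorem mainTheorem5 (R : realType) (S E Om : finType)
    (psi : S -> R[i]) (phi : E -> R[i])
    (U : R -> (S * E)%type -> (S * E)%type -> R[i])
    (pi : Om -> E -> R[i]) :
  normsq psi = 1 ->
  normsq phi = 1 ->
  C1_family U ->
  unitary_family U ->
  orthonormal_basis pi ->
  forall x : R,
    (forall w : Om, 0 < prob psi phi U pi w x ->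
       prob psi phi U pi w x * QFI (sigvec psi phi U pi w) x
       + (derive1 (prob psi phi U pi w) x) ^+ 2 / prob psi phi U pi w x
       <= Iomega psi phi U pi w x) /\
    (forall A : {set Om}, (forall w, w \in A -> 0 < prob psi phi U pi w x) ->
       \sum_(w in A) prob psi phi U pi w x * QFI (sigvec psi phi U pi w) x
       <= QFI (Psi psi phi U) x).
Proof.
move=> Hpsi Hphi HC1 HU Hpi x; split.
- move=> w hp; exact: (part1 Hpsi Hphi HC1 HU hp).
- move=> A HA; exact: (part2 Hpsi Hphi HC1 HU Hpi HA).
Qed.
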